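(* Let $(X,G)$ be topologically transitive and $X_0$ a dense $G$-invariant subset of $X_t$. Then $Q_0\subseteq S^{eq}_0$, and consequently $S^\ast_0\subseteq S^{eq}_0$.
   Context: $G$ is a group acting by homeomorphisms $x\mapsto gx$ on a compact metrizable space $X$, topologically transitive; $X_t:=\{x\in X:\overline{Gx}=X\}$; $X_0$ carries the subspace topology and $X_0^2$ the product topology. $G$ acts diagonally on $X^2$. $\Delta_0:=\{(x,x):x\in X_0\}$. $\mathcal U_0$ is the family of sets $U\cap X_0^2$ with $U\subseteq X^2$ open, $G$-invariant, $\Delta_0\subseteq U$; $Q_0:=\bigcap_{U_0\in\mathcal U_0}\overline{U_0}\cap X_0^2$. For a continuous $G$-equivariant map $\pi:X_0\to Y$ into a compact metrizable system $(Y,G)$ that is equicontinuous and minimal (equivalently, a compact metrizable group on which $G$ acts minimally by translations), let $S^\pi_0:=\{(x,x')\in X_0^2:\pi(x)=\pi(x')\}$; $S^{eq}_0:=\bigcap_\pi S^\pi_0$, the intersection over all such $Y$ and $\pi$. $S^\ast_0$ is the smallest closed (in $X_0^2$), $G$-invariant equivalence relation on $X_0$ containing $Q_0$. *)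

(* Defs.v *)
From Stdlib Require Import Reals List.
Open Scope R_scope.
Set Implicit Arguments.

Definition is_group (G : Type) (mul : G -> G -> G) (one : G) (inv : G -> G) : Prop :=
  (forall a b c, mul a (mul b c) = mul (mul a b) c) /\
  (forall a, mul one a = a) /\ (forall a, mul a one = a) /\
  (forall a, mul (inv a) a = one) /\ (forall a, mul a (inv a) = one).

Definition is_metric (X : Type) (d : X -> X -> R) : Prop :=
  (forall x y, 0 <= d x y) /\ (forall x y, d x y = 0 <-> x = y) /\
  (forall x y, d x y = d y x) /\ (forall x y z, d x z <= d x y + d y z).

Definition is_open (X : Type) (d : X -> X -> R) (U : X -> Prop) : Prop :=
  forall x, U x -> exists r, 0 < r /\ forall y, d x y < r -> U y.

Definition is_compact (X : Type) (d : X -> X -> R) : Prop :=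
  forall (I : Type) (U : I -> X -> Prop),
    (forall i, is_open d (U i)) -> (forall x, exists i, U i x) ->
    exists l : list I, forall x, exists i, In i l /\ U i x.

Definition dense (X : Type) (d : X -> X -> R) (A : X -> Prop) : Prop :=
  forall x eps, 0 < eps -> exists y, A y /\ d x y < eps.

Definition continuous (X Y : Type) (dX : X -> X -> R) (dY : Y -> Y -> R) (f : X -> Y) : Prop :=
  forall x eps, 0 < eps -> exists delta, 0 < delta /\
    forall y, dX x y < delta -> dY (f x) (f y) < eps.

Definition continuous_on (X Y : Type) (dX : X -> X -> R) (dY : Y -> Y -> R)
  (A : X -> Prop) (f : X -> Y) : Prop :=
  forall x, A x -> forall eps, 0 < eps -> exists delta, 0 < delta /\
    forall y, A y -> dX x y < delta -> dY (f x) (f y) < eps.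

(* action of G by homeomorphisms (inverse of act g is act (inv g)) *)
Definition is_action (G X : Type) (mul : G -> G -> G) (one : G)
  (d : X -> X -> R) (act : G -> X -> X) : Prop :=
  (forall x, act one x = x) /\
  (forall g h x, act (mul g h) x = act g (act h x)) /\
  (forall g, continuous d d (act g)).

Definition orbit (G X : Type) (act : G -> X -> X) (x : X) : X -> Prop :=
  fun y => exists g, y = act g x.

Definition top_transitive (G X : Type) (d : X -> X -> R) (act : G -> X -> X) : Prop :=
  forall U V : X -> Prop, is_open d U -> is_open d V ->
    (exists x, U x) -> (exists y, V y) ->
    exists g x, U x /\ V (act g x).

Definition Xt (G X : Type) (d : X -> X -> R) (act : G -> X -> X) : X -> Prop :=
  fun x => dense d (orbit act x).

Definition invariant (G X : Type) (act : G -> X -> X) (A : X -> Prop) : Prop :=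
  forall g x, A x -> A (act g x).

(* product (max) metric on X^2, inducing the product topology; diagonal action *)
Definition d2 (X : Type) (d : X -> X -> R) (p q : X * X) : R :=
  Rmax (d (fst p) (fst q)) (d (snd p) (snd q)).

Definition act2 (G X : Type) (act : G -> X -> X) (g : G) (p : X * X) : X * X :=
  (act g (fst p), act g (snd p)).

Definition closure (X : Type) (d : X -> X -> R) (A : X -> Prop) : X -> Prop :=
  fun x => forall eps, 0 < eps -> exists y, A y /\ d x y < eps.

Definition in_sq (X : Type) (X0 : X -> Prop) (p : X * X) : Prop :=
  X0 (fst p) /\ X0 (snd p).

Definition Q0 (G X : Type) (d : X -> X -> R) (act : G -> X -> X) (X0 : X -> Prop)
  (p : X * X) : Prop :=
  in_sq X0 p /\
  forall U : X * X -> Prop,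
    is_open (d2 d) U -> invariant (act2 act) U -> (forall x, X0 x -> U (x, x)) ->
    closure (d2 d) (fun q => U q /\ in_sq X0 q) p.

Definition equicontinuous (G Y : Type) (dY : Y -> Y -> R) (actY : G -> Y -> Y) : Prop :=
  forall eps, 0 < eps -> exists delta, 0 < delta /\
    forall g y y', dY y y' < delta -> dY (actY g y) (actY g y') < eps.

Definition minimal (G Y : Type) (dY : Y -> Y -> R) (actY : G -> Y -> Y) : Prop :=
  forall y, dense dY (orbit actY y).

(* S^eq_0 : intersection over all equicontinuous minimal compact metric factors
   pi : X_0 -> Y (pi given as a function on X; only its values on X_0 matter) *)
Definition Seq (G X : Type) (mul : G -> G -> G) (one : G) (d : X -> X -> R)
  (act : G -> X -> X) (X0 : X -> Prop) (p : X * X) : Prop :=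
  in_sq X0 p /\
  forall (Y : Type) (dY : Y -> Y -> R) (actY : G -> Y -> Y),
    is_metric dY -> is_compact dY -> is_action mul one dY actY ->
    equicontinuous dY actY -> minimal dY actY ->
    forall pi : X -> Y,
      continuous_on d dY X0 pi ->
      (forall g x, X0 x -> pi (act g x) = actY g (pi x)) ->
      pi (fst p) = pi (snd p).

Definition closed_inv_equiv (G X : Type) (d : X -> X -> R) (act : G -> X -> X)
  (X0 : X -> Prop) (S : X * X -> Prop) : Prop :=
  (forall p, S p -> in_sq X0 p) /\
  (forall p, in_sq X0 p -> closure (d2 d) S p -> S p) /\
  invariant (act2 act) S /\
  (forall x, X0 x -> S (x, x)) /\
  (forall x y, S (x, y) -> S (y, x)) /\
  (forall x y z, S (x, y) -> S (y, z) -> S (x, z)).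

Definition Sstar (G X : Type) (d : X -> X -> R) (act : G -> X -> X)
  (X0 : X -> Prop) (p : X * X) : Prop :=
  forall S : X * X -> Prop,
    closed_inv_equiv d act X0 S -> (forall q, Q0 d act X0 q -> S q) -> S p.

(* Main.v *)
Require Import Defs.
From Stdlib Require Import Reals List Lra.
Open Scope R_scope.

Lemma metric_eq (Y : Type) (dY : Y -> Y -> R) a b :
  is_metric dY -> (forall eps, 0 < eps -> dY a b < eps) -> a = b.
Proof.
  intros [H0 [H1 [H2 H3]]] H.
  apply H1. destruct (Rle_lt_or_eq_dec 0 (dY a b) (H0 a b)) as [Hl|He]; [|auto].
  specialize (H _ Hl). lra.
Qed.

Lemma seq_closed (G X : Type) (mul : G -> G -> G) (one : G) (d : X -> X -> R)
  (act : G -> X -> X) (X0 : X -> Prop) (p : X * X) :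
  in_sq X0 p -> closure (Defs.d2 d) (Seq mul one d act X0) p -> Seq mul one d act X0 p.
Proof.
  intros Hp Hc. split; [exact Hp|].
  intros Y dY actY HmY HC HA HE HM pi Hpi HEq.
  apply (@metric_eq _ dY _ _ HmY). intros eps He.
  pose proof HmY as HmY'. destruct HmY' as [Hn [Hz [Hs Ht]]].
  destruct Hp as [Hp1 Hp2].
  destruct (Hpi _ Hp1 (eps/2)) as [r1 [Hr1 Hb1]]; [lra|].
  destruct (Hpi _ Hp2 (eps/2)) as [r2 [Hr2 Hb2]]; [lra|].
  destruct (Hc (Rmin r1 r2)) as [q [[[Hq1 Hq2] Hq] Hd]].
  { apply Rmin_pos; auto. }
  unfold Defs.d2 in Hd.
  assert (E : pi (fst q) = pi (snd q)).
  { apply (Hq Y dY actY); auto. }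
  assert (A1 : dY (pi (fst p)) (pi (fst q)) < eps/2).
  { apply Hb1; auto. eapply Rle_lt_trans; [apply Rmax_l|].
    eapply Rlt_le_trans; [apply Hd|apply Rmin_l]. }
  assert (A2 : dY (pi (snd p)) (pi (snd q)) < eps/2).
  { apply Hb2; auto. eapply Rle_lt_trans; [apply Rmax_r|].
    eapply Rlt_le_trans; [apply Hd|apply Rmin_r]. }
  rewrite E in A1. rewrite Hs in A2.
  pose proof (Ht (pi (fst p)) (pi (snd q)) (pi (snd p))). lra.
Qed.

Theorem mainTheorem4
  (G : Type) (mul : G -> G -> G) (one : G) (inv : G -> G)
  (X : Type) (d : X -> X -> R) (act : G -> X -> X) (X0 : X -> Prop) :
  is_group mul one inv ->
  is_metric d -> is_compact d ->
  is_action mul one d act ->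
  top_transitive d act ->
  (forall x, X0 x -> Xt d act x) -> dense d X0 -> invariant act X0 ->
  (forall p, Q0 d act X0 p -> Seq mul one d act X0 p) /\
  (forall p, Sstar d act X0 p -> Seq mul one d act X0 p).
Proof.
  intros Hg Hm _ Ha _ _ _ Hinv.
  destruct Hg as [gA [gl [gr [gVl gVr]]]].
  destruct Hm as [dn [dz [ds dt]]].
  destruct Ha as [a1 [aM aC]].
  assert (P1 : forall p, Q0 d act X0 p -> Seq mul one d act X0 p).
  { intros p [Hp HQ]. split; [exact Hp|].
    intros Y dY actY HmY _ HaY Heq _ pi Hpi Hequiv.
    apply (@metric_eq _ dY _ _ HmY). intros eps He.
    destruct HmY as [yn [yz [ys yt]]].
    destruct HaY as [b1 [bM _]].
    destruct (Heq (eps/3)) as [de [Hde Hdeq]]; [lra|].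
    set (V := fun q : X * X => exists z r, X0 z /\ 0 < r /\
          (forall y, X0 y -> d z y < r -> dY (pi z) (pi y) < de/2) /\
          d z (fst q) < r /\ d z (snd q) < r).
    set (U := fun q : X * X => exists g, V (act2 act g q)).
    assert (Vo : is_open (Defs.d2 d) V).
    { intros q [z [r [Hz [Hr [Hb [H1 H2]]]]]].
      exists (Rmin (r - d z (fst q)) (r - d z (snd q))). split.
      { apply Rmin_pos; lra. }
      intros y Hy. unfold Defs.d2 in Hy. exists z, r. repeat split; auto.
      - pose proof (dt z (fst q) (fst y)).
        assert (d (fst q) (fst y) < r - d z (fst q)).
        { eapply Rle_lt_trans; [apply Rmax_l|]. eapply Rlt_le_trans; [apply Hy|apply Rmin_l]. }
        lra.
      - pose proof (dt z (snd q) (snd y)).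
        assert (d (snd q) (snd y) < r - d z (snd q)).
        { eapply Rle_lt_trans; [apply Rmax_r|]. eapply Rlt_le_trans; [apply Hy|apply Rmin_r]. }
        lra. }
    assert (Uo : is_open (Defs.d2 d) U).
    { intros q [g Hq]. destruct (Vo _ Hq) as [s [Hs Hsb]].
      destruct (aC g (fst q) s Hs) as [e1 [He1 Hb1]].
      destruct (aC g (snd q) s Hs) as [e2 [He2 Hb2]].
      exists (Rmin e1 e2). split; [apply Rmin_pos; auto|].
      intros y Hy. exists g. apply Hsb. unfold Defs.d2, act2 in *; simpl.
      apply Rmax_lub_lt.
      - apply Hb1. eapply Rle_lt_trans; [apply Rmax_l|]. eapply Rlt_le_trans; [apply Hy|apply Rmin_l].
      - apply Hb2. eapply Rle_lt_trans; [apply Rmax_r|]. eapply Rlt_le_trans; [apply Hy|apply Rmin_r]. }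
    assert (Ui : invariant (act2 act) U).
    { intros h q [g Hq]. exists (mul g (inv h)). unfold act2 in *; simpl in *.
      rewrite !aM, <- !(aM (inv h) h), gVl, !a1. exact Hq. }
    assert (Ud : forall x, X0 x -> U (x, x)).
    { intros x Hx. exists one. unfold act2; simpl. rewrite a1.
      destruct (Hpi x Hx (de/2)) as [r [Hr Hb]]; [lra|].
      exists x, r. repeat split; simpl; auto; rewrite (proj2 (dz x x) eq_refl); lra. }
    assert (Usmall : forall q, U q -> in_sq X0 q -> dY (pi (fst q)) (pi (snd q)) < eps/3).
    { intros q [g [z [r [Hz [Hr [Hb [H1 H2]]]]]]] [Hq1 Hq2].
      unfold act2 in *; simpl in *.
      assert (G1 := Hb _ (Hinv g _ Hq1) H1).
      assert (G2 := Hb _ (Hinv g _ Hq2) H2).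
      rewrite (Hequiv g _ Hq1) in G1. rewrite (Hequiv g _ Hq2) in G2.
      assert (dY (actY g (pi (fst q))) (actY g (pi (snd q))) < de).
      { pose proof (yt (actY g (pi (fst q))) (pi z) (actY g (pi (snd q)))).
        rewrite ys in G1. lra. }
      specialize (Hdeq (inv g) _ _ H).
      rewrite <- !bM, gVl, !b1 in Hdeq. exact Hdeq. }
    destruct Hp as [Hp1 Hp2].
    destruct (Hpi _ Hp1 (eps/3)) as [r1 [Hr1 Hb1]]; [lra|].
    destruct (Hpi _ Hp2 (eps/3)) as [r2 [Hr2 Hb2]]; [lra|].
    destruct (HQ U Uo Ui Ud (Rmin r1 r2)) as [q [[HqU Hq] Hd]].
    { apply Rmin_pos; auto. }
    pose proof (Usmall q HqU Hq) as E. destruct Hq as [Hq1 Hq2].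
    unfold Defs.d2 in Hd.
    assert (A1 : dY (pi (fst p)) (pi (fst q)) < eps/3).
    { apply Hb1; auto. eapply Rle_lt_trans; [apply Rmax_l|].
      eapply Rlt_le_trans; [apply Hd|apply Rmin_l]. }
    assert (A2 : dY (pi (snd p)) (pi (snd q)) < eps/3).
    { apply Hb2; auto. eapply Rle_lt_trans; [apply Rmax_r|].
      eapply Rlt_le_trans; [apply Hd|apply Rmin_r]. }
    rewrite ys in A2.
    pose proof (yt (pi (fst p)) (pi (fst q)) (pi (snd p))).
    pose proof (yt (pi (fst q)) (pi (snd q)) (pi (snd p))). lra. }
  split; [exact P1|].
  intros p Hs. apply Hs; [|exact P1].
  split; [|split; [|split; [|split; [|split]]]].
  - intros q Hq; apply Hq.
  - intros q Hq Hc. apply seq_closed; auto.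
  - intros g q [[Hq1 Hq2] Hq]. split; [split; simpl; apply Hinv; auto|].
    intros Y dY actY H1 H2 H3 H4 H5 pi Hpi Hequiv. simpl.
    rewrite (Hequiv g _ Hq1), (Hequiv g _ Hq2).
    f_equal. eapply Hq; eauto.
  - intros x Hx; split; [split; auto|]. intros; reflexivity.
  - intros x y [[H1 H2] H]; split; [split; auto|].
    intros; symmetry; eapply H; eauto.
  - intros x y z [[H1 H2] H] [[H3 H4] H']; split; [split; auto|].
    intros. simpl in *. transitivity (pi y); [eapply H|eapply H']; eauto.
Qed.
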